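(* Let $R$ be a valuation ring, $M$ its maximal ideal and $Z$ the set of zero divisors of $R$. Then: (1) $M$ is a flat $R$-module if and only if the annihilator $(0:r)$ is not finitely generated for every $r\in Z\setminus\{0\}$; (2) if $r,s\in R$ satisfy $rs\neq 0$, then $(0:rs)=((0:r):s)$ and $(0:r)=s\,(0:rs)$; moreover, if $(0:r)\neq 0$, then $(0:r)$ is finitely generated if and only if $(0:rs)$ is finitely generated.
   Context: All rings are commutative with identity. A valuation ring is a ring whose ideals are totally ordered by inclusion. For an ideal $A$ and $x\in R$, $(A:x)=\{y\in R: xy\in A\}$ and $(0:x)$ is the annihilator of $x$. *)

(* Defs.v *)
From HB Require Import structures.
From mathcomp Require Import all_boot all_order all_algebra.
Set Implicit Arguments. Unset Strict Implicit. Unset Printing Implicit Defensive.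
Import GRing.Theory.
Local Open Scope ring_scope.

(* Subsets of R are Prop-valued predicates (ideals need not be decidable). *)
Definition rset (R : Type) := R -> Prop.

Definition rseteq (R : Type) (A B : rset R) : Prop := forall x, A x <-> B x.
Definition rsubset (R : Type) (A B : rset R) : Prop := forall x, A x -> B x.

Section Ideals.
Variable R : comNzRingType.

Definition is_ideal (I : rset R) : Prop :=
  [/\ I 0, (forall x y, I x -> I y -> I (x + y)) & (forall a x, I x -> I (a * x))].

Definition proper_ideal (I : rset R) : Prop := is_ideal I /\ ~ I 1.

Definition maximal_ideal (M : rset R) : Prop :=
  proper_ideal M /\ (forall J, proper_ideal J -> rsubset M J -> rsubset J M).

Definition valuation_ring : Prop :=
  forall I J : rset R, is_ideal I -> is_ideal J -> rsubset I J \/ rsubset J I.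

Definition colon (A : rset R) (x : R) : rset R := fun y => A (x * y).

Definition zero_ideal : rset R := fun y => y = 0.

Definition ann (x : R) : rset R := colon zero_ideal x.

Definition scale_set (s : R) (A : rset R) : rset R := fun z => exists2 y, A y & z = s * y.

(* zero divisors (including 0): r with r s = 0 for some s <> 0 *)
Definition zero_divisor (r : R) : Prop := exists s, s <> 0 /\ r * s = 0.

Definition fin_gen (I : rset R) : Prop :=
  exists (n : nat) (g : 'I_n -> R),
    forall y, I y <-> exists c : 'I_n -> R, y = \sum_(i < n) c i * g i.

(* B : A x S -> P is R-bilinear (S given as a subset of R; bilinearity is
   only required on arguments in S). *)
Definition bilinear_on (A P : lmodType R) (S : rset R) (B : A -> R -> P) : Prop :=
  (forall x, S x -> forall (c : R) (a1 a2 : A), B (c *: a1 + a2) x = c *: B a1 x + B a2 x)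
  /\ (forall (a : A) (c : R) x1 x2, S x1 -> S x2 ->
        B a (c * x1 + x2) = c *: B a x1 + B a x2).

(* The element \sum_i a_i (x) x_i of the tensor product A (x)_R S is zero,
   characterised via the universal property: every bilinear map kills it. *)
Definition tensor_zero (A : lmodType R) (S : rset R) (k : nat)
    (a : 'I_k -> A) (x : 'I_k -> R) : Prop :=
  forall (P : lmodType R) (B : A -> R -> P), bilinear_on S B ->
    \sum_(i < k) B (a i) (x i) = 0.

(* S (an R-submodule of R) is flat: for every injective R-linear map
   f : N -> N', the induced map N (x) S -> N' (x) S is injective. *)
Definition flat_submodule (S : rset R) : Prop :=
  forall (N N' : lmodType R) (f : {linear N -> N'}), injective f ->
  forall (k : nat) (n : 'I_k -> N) (x : 'I_k -> R), (forall i, S (x i)) ->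
    tensor_zero S (fun i => f (n i)) x -> tensor_zero S n x.

End Ideals.

(* Main.v *)
Require Import Defs.
From HB Require Import structures.
From mathcomp Require Import all_boot all_order all_algebra.
From mathcomp Require Import boolp functions.
Require Import Defs.
Set Implicit Arguments. Unset Strict Implicit. Unset Printing Implicit Defensive.
Import GRing.Theory.
Local Open Scope ring_scope.

Section QuotDefs.
Variables (R : comNzRingType) (V : lmodType R).
Record submod := Submod {
  smem :> V -> Prop;
  smem0 : smem 0;
  smemD : forall u v, smem u -> smem v -> smem (u + v);
  smemZ : forall (a : R) v, smem v -> smem (a *: v) }.
Variable S : submod.
Lemma smemN v : S v -> S (- v).
Proof. by move=> Sv; rewrite -scaleN1r; apply: smemZ. Qed.
Lemma smemB u v : S u -> S v -> S (u - v).
Proof. by move=> Su Sv; apply: smemD => //; apply: smemN. Qed.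

Definition qrel (u v : V) : bool := `[< S (u - v) >].
Lemma qrel_refl v : qrel v v.
Proof. by apply/asboolP; rewrite subrr; apply: smem0. Qed.
Definition canon (v : V) : V := xchoose (ex_intro (qrel v) v (qrel_refl v)).
Lemma canonP v : S (v - canon v).
Proof. exact/asboolP/(xchooseP (ex_intro (qrel v) v (qrel_refl v))). Qed.
Lemma canon_eq u v : S (u - v) -> canon u = canon v.
Proof.
move=> Suv; apply: eq_xchoose => w; apply/asboolP/asboolP => H.
  by have := smemD (smemN Suv) H; rewrite opprB addrA subrK.
by have := smemD Suv H; rewrite addrA subrK.
Qed.
Lemma canon_eqP u v : canon u = canon v -> S (u - v).
Proof.
move=> e; have := smemB (canonP u) (canonP v).
by rewrite e opprB addrA subrK.
Qed.
Lemma canon_idem v : canon (canon v) = canon v.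
Proof. by apply: canon_eq; rewrite -opprB; apply/smemN/canonP. Qed.

Record quot := Quot { qval : V; qvalP : canon qval == qval }.
End QuotDefs.

HB.instance Definition _ R V S := [isSub for @qval R V S].
HB.instance Definition _ R V S := [Choice of @quot R V S by <:].

Section QuotOps.
Variables (R : comNzRingType) (V : lmodType R) (S : submod V).
Definition qpi (v : V) : quot S := @Quot R V S (canon S v) (introT eqP (canon_idem S v)).
Lemma qpiK (q : quot S) : qpi (qval q) = q.
Proof. by apply: val_inj => /=; apply/eqP; case: q. Qed.
Lemma qpi_eq u v : qpi u = qpi v <-> S (u - v).
Proof.
split=> [e|H]; first by apply: canon_eqP; exact: (congr1 val e).
by apply: val_inj; apply: canon_eq.
Qed.
Lemma qpi_canon v : qpi (canon S v) = qpi v.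
Proof. by apply/qpi_eq; rewrite -opprB; apply/smemN/canonP. Qed.

Definition qzero := qpi 0.
Definition qadd (a b : quot S) := qpi (qval a + qval b).
Definition qopp (a : quot S) := qpi (- qval a).
Definition qscale (c : R) (a : quot S) := qpi (c *: qval a).

Lemma canonP' v : S (canon S v - v).
Proof. by have := smemN (canonP S v); rewrite opprB. Qed.
Lemma qaddE u v : qadd (qpi u) (qpi v) = qpi (u + v).
Proof.
apply/qpi_eq => /=; rewrite opprD addrACA.
by apply: smemD; apply: canonP'.
Qed.
Lemma qoppE u : qopp (qpi u) = qpi (- u).
Proof. by apply/qpi_eq => /=; rewrite opprK addrC; apply: canonP. Qed.
Lemma qscaleE c u : qscale c (qpi u) = qpi (c *: u).
Proof.
by apply/qpi_eq => /=; rewrite -scalerBr; apply: smemZ; apply: canonP'.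
Qed.

Lemma qaddA : associative qadd.
Proof. by move=> a b c; rewrite -(qpiK a) -(qpiK b) -(qpiK c) !qaddE addrA. Qed.
Lemma qaddC : commutative qadd.
Proof. by move=> a b; rewrite -(qpiK a) -(qpiK b) !qaddE addrC. Qed.
Lemma qadd0 : left_id qzero qadd.
Proof. by move=> a; rewrite -(qpiK a) /qzero qaddE add0r. Qed.
Lemma qaddN : left_inverse qzero qopp qadd.
Proof. by move=> a; rewrite -(qpiK a) qoppE qaddE addNr. Qed.
End QuotOps.

HB.instance Definition _ R V S := GRing.isZmodule.Build (@quot R V S)
  (@qaddA R V S) (@qaddC R V S) (@qadd0 R V S) (@qaddN R V S).

Section QuotLmod.
Variables (R : comNzRingType) (V : lmodType R) (S : submod V).
Lemma qpiD u v : qpi S (u + v) = qpi S u + qpi S v.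
Proof. by rewrite -qaddE. Qed.
Lemma qscaleA a b (v : quot S) : qscale a (qscale b v) = qscale (a * b) v.
Proof. by rewrite -(qpiK v) !qscaleE scalerA. Qed.
Lemma qscale1 : left_id 1 (@qscale R V S).
Proof. by move=> v; rewrite -(qpiK v) qscaleE scale1r. Qed.
Lemma qscaleDr : right_distributive (@qscale R V S) +%R.
Proof. by move=> a u v; rewrite -(qpiK u) -(qpiK v) -qpiD !qscaleE -qpiD scalerDr. Qed.
Lemma qscaleDl v : {morph (@qscale R V S)^~ v : a b / a + b}.
Proof. by move=> a b; rewrite -(qpiK v) !qscaleE -qpiD scalerDl. Qed.
End QuotLmod.

HB.instance Definition _ (R : comNzRingType) (V : lmodType R) (S : submod V) := GRing.Zmodule_isLmodule.Build R (@quot R V S)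
  (@qscaleA R V S) (@qscale1 R V S) (@qscaleDr R V S) (@qscaleDl R V S).

Section QuotTheory.
Variables (R : comNzRingType) (V : lmodType R) (S : submod V).
Lemma qpiZ c u : qpi S (c *: u) = c *: qpi S u.
Proof. by rewrite -qscaleE. Qed.
Lemma qpi0 u : qpi S u = 0 <-> S u.
Proof. by rewrite [0]/(qpi S 0) qpi_eq subr0. Qed.
End QuotTheory.

Section Val.
Variables (R : comNzRingType) (M : rset R).
Hypothesis hV : valuation_ring R.
Hypothesis hM : maximal_ideal M.

Definition dv (a b : R) := exists d, b = d * a.

Lemma dv_refl a : dv a a. Proof. by exists 1; rewrite mul1r. Qed.
Lemma dv_trans a b c : dv a b -> dv b c -> dv a c.
Proof. by move=> [d ->] [e ->]; exists (e * d); rewrite mulrA. Qed.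
Lemma dv_mull a b c : dv a b -> dv a (c * b).
Proof. by move=> [d ->]; exists (c * d); rewrite mulrA. Qed.

Lemma pid_ideal a : is_ideal (dv a).
Proof.
split; first by exists 0; rewrite mul0r.
  by move=> x y [d ->] [e ->]; exists (d + e); rewrite mulrDl.
by move=> b x [d ->]; exists (b * d); rewrite mulrA.
Qed.

Lemma dv_total a b : dv a b \/ dv b a.
Proof.
case: (hV (pid_ideal a) (pid_ideal b)) => H.
  by right; apply: H; apply: dv_refl.
by left; apply: H; apply: dv_refl.
Qed.

Lemma M_ideal : is_ideal M. Proof. by case: hM => [[]]. Qed.
Lemma M0 : M 0. Proof. by case: M_ideal. Qed.
Lemma MD x y : M x -> M y -> M (x + y). Proof. by case: M_ideal => _ H _; apply: H. Qed.
Lemma MM a x : M x -> M (a * x). Proof. by case: M_ideal => _ _ H; apply: H. Qed.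
Lemma M1 : ~ M 1. Proof. by case: hM => [[]]. Qed.

Lemma nonunit_M a : ~ (exists u, a * u = 1) -> M a.
Proof.
move=> nu.
have pa : proper_ideal (dv a).
  split; first exact: pid_ideal.
  by move=> [d e]; apply: nu; exists d; rewrite mulrC -e.
case: (hV M_ideal (pid_ideal a)) => H.
  by case: hM => _ /(_ _ pa H); apply; apply: dv_refl.
by apply: H; apply: dv_refl.
Qed.

Lemma notM_unit a : ~ M a -> exists u, a * u = 1.
Proof.
move=> nM; case: (pselect (exists u, a * u = 1)) => // H.
by case: nM; apply: nonunit_M.
Qed.

Lemma unit1M m : M m -> exists u, (1 + m) * u = 1.
Proof.
move=> Mm; apply: notM_unit => H; apply: M1.
by have := MD H (MM (-1) Mm); rewrite mulN1r addrK.
Qed.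

Lemma cancel1M t m : M m -> t * (1 + m) = 0 -> t = 0.
Proof.
move=> Mm e; have [u eu] := unit1M Mm.
by rewrite -[t]mulr1 -eu mulrA e mul0r.
Qed.

Definition span n (g : 'I_n -> R) : rset R :=
  fun y => exists c : 'I_n -> R, y = \sum_(i < n) c i * g i.

Lemma span_ideal n (g : 'I_n -> R) : is_ideal (span g).
Proof.
split.
- by exists (fun _ => 0); rewrite big1 // => i _; rewrite mul0r.
- move=> x y [c ->] [d ->]; exists (fun i => c i + d i).
  by rewrite -big_split /=; apply: eq_bigr => i _; rewrite mulrDl.
- move=> a x [c ->]; exists (fun i => a * c i).
  by rewrite mulr_sumr; apply: eq_bigr => i _; rewrite mulrA.
Qed.

Lemma span_gen n (g : 'I_n -> R) j : span g (g j).
Proof.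
exists (fun i => (i == j)%:R).
rewrite (bigD1 j) //= eqxx mul1r big1 ?addr0 // => i /negbTE ->.
by rewrite mul0r.
Qed.

Lemma fin_genE (I : rset R) : fin_gen I <-> exists n (g : 'I_n -> R), rseteq I (span g).
Proof. by []. Qed.

Lemma seq_min (x0 : R) (s : seq R) :
  exists2 d, d \in x0 :: s & forall y, y \in x0 :: s -> dv d y.
Proof.
elim: s x0 => [|x1 s IH] x0.
  by exists x0; rewrite ?mem_head // => y; rewrite inE => /eqP ->; apply: dv_refl.
have [d dIn dd] := IH x1.
case: (dv_total d x0) => H.
  exists d; first by rewrite inE dIn orbT.
  move=> y; rewrite inE => /orP [/eqP -> //|]; exact: dd.
exists x0; first exact: mem_head.
move=> y; rewrite inE => /orP [/eqP ->|]; first exact: dv_refl.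
by move=> /dd; apply: dv_trans.
Qed.

Lemma max_div n (g : 'I_n.+1 -> R) : exists j, forall i, dv (g j) (g i).
Proof.
have [d dIn dd] := seq_min (g ord0) [seq g i | i <- enum 'I_n.+1].
have [j ej] : exists j, d = g j.
  move: dIn; rewrite inE => /orP [/eqP ->|/mapP [j _ ->]]; last by exists j.
  by exists ord0.
rewrite {}ej in dd.
by exists j => i; apply: dd; rewrite inE; apply/orP; right; apply: map_f; rewrite mem_enum.
Qed.

Lemma ann_ideal (r : R) : is_ideal (ann r).
Proof.
rewrite /ann /colon /zero_ideal; split.
- by rewrite mulr0.
- by move=> x y ex ey; rewrite mulrDr ex ey addr0.
- by move=> a x e; rewrite mulrCA e mulr0.
Qed.

Lemma annE (r y : R) : ann r y <-> r * y = 0. Proof. by []. Qed.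

Lemma fg_principal (I : rset R) : @is_ideal R I -> fin_gen I -> forall s, I s -> s <> 0 ->
  exists t, I t /\ forall y, I y -> dv t y.
Proof.
move=> idI [n [g Hg]] s Is s0.
case: n g Hg => [|n] g Hg.
  by case: s0; have [c ->] := (Hg s).1 Is; rewrite big_ord0.
have [j dj] := max_div g.
exists (g j); split; first by apply/Hg; apply: span_gen.
move=> y /Hg [c ->].
elim/big_rec: _ => [|i x _ Hx]; first by exists 0; rewrite mul0r.
by case: (pid_ideal (g j)) => _ HD _; apply: HD => //; apply: dv_mull.
Qed.

Lemma nfg_split (I : rset R) : @is_ideal R I -> ~ fin_gen I -> forall z, I z ->
  exists z' e, [/\ I z', M e & z = e * z'].
Proof.
move=> idI nfg z Iz.
case: (pselect (exists y, I y /\ ~ dv z y)) => [[y [Iy ndy]]|H].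
  case: (dv_total z y) => // [[e ez]].
  exists y, e; split => //; apply: nonunit_M => [[u eu]].
  by apply: ndy; exists u; rewrite ez mulrA [u * e]mulrC eu mul1r.
case: nfg; exists 1%N, (fun _ => z) => y; split.
  move=> Iy; case: (pselect (dv z y)) => [[d ->]|nd]; last by case: H; exists y.
  by exists (fun _ => d); rewrite big_ord1.
move=> [c ->]; rewrite big_ord1.
by case: idI => _ _; apply.
Qed.

Lemma part2 (r s : R) : r * s <> 0 ->
     rseteq (ann (r * s)) (colon (ann r) s)
     /\ rseteq (ann r) (scale_set s (ann (r * s)))
     /\ (~ rseteq (ann r) (@zero_ideal R) ->
           (fin_gen (ann r) <-> fin_gen (ann (r * s)))).
Proof.
move=> rs0.
have h1 : rseteq (ann (r * s)) (colon (ann r) s).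
  by move=> y; rewrite /ann/colon/zero_ideal mulrA.
have h2 : rseteq (ann r) (scale_set s (ann (r * s))).
  move=> y; split.
    rewrite /ann/colon/zero_ideal => ry.
    case: (dv_total s y) => [[d ey]|[d ed]].
      exists d; last by rewrite ey mulrC.
      by rewrite /ann/colon/zero_ideal -mulrA [s * d]mulrC -ey.
    by case: rs0; rewrite ed mulrCA ry mulr0.
  by move=> [y' Hy' ->]; rewrite /ann/colon/zero_ideal mulrA.
split => //; split => // nz.
split.
- move=> [n [g Hg]].
  have Hgi : forall i, exists y, ann (r * s) y /\ g i = s * y.
    move=> i; have : ann r (g i) by apply/Hg; apply: span_gen.
    by move/h2 => [y Hy ->]; exists y.
  pose yy i := projT1 (cid (Hgi i)).
  have yyP i : ann (r * s) (yy i) /\ g i = s * yy i := projT2 (cid (Hgi i)).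
  exists n, yy => y; split; last first.
    move=> [c ->]; rewrite /ann/colon/zero_ideal mulr_sumr big1 // => i _.
    by rewrite mulrCA (proj1 (yyP i)) mulr0.
  move=> Hy.
  have : ann r (s * y) by rewrite /ann/colon/zero_ideal mulrA.
  move/Hg => [c ec].
  have ec' : s * (y - \sum_(i < n) c i * yy i) = 0.
    rewrite mulrBr ec mulr_sumr; apply/eqP; rewrite subr_eq0; apply/eqP/eq_bigr => i _.
    by rewrite (proj2 (yyP i)) mulrCA.
  case: (hV (ann_ideal s) (span_ideal yy)) => Hsub.
    have := Hsub _ ec'; move=> [d ed].
    exists (fun i => d i + c i).
    by rewrite -[y](subrK (\sum_(i < n) c i * yy i)) ed -big_split /=; apply: eq_bigr => i _; rewrite mulrDl.
  case: nz => z; split; last by move=> ->; rewrite /ann/colon/zero_ideal mulr0.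
  move/Hg => [c' ->]; rewrite /zero_ideal big1 // => i _.
  rewrite (proj2 (yyP i)).
  by have := Hsub _ (span_gen yy i); rewrite /ann/colon/zero_ideal => ->; rewrite mulr0.
- move=> [n [g Hg]].
  exists n, (fun i => s * g i) => y; split.
    move/h2 => [y' /Hg [c ->] ->].
    by exists c; rewrite mulr_sumr; apply: eq_bigr => i _; rewrite mulrCA.
  move=> [c ->]; apply/h2; exists (\sum_(i < n) c i * g i).
    by apply/Hg; exists c.
  by rewrite mulr_sumr; apply: eq_bigr => i _; rewrite mulrCA.
Qed.

End Val.

Section Bil.
Variables (R : comNzRingType) (S : rset R) (A P : lmodType R) (B : A -> R -> P).
Hypothesis hB : bilinear_on S B.

Lemma B0l x : S x -> B 0 x = 0.
Proof.
move=> Sx; have := hB.1 x Sx 1 0 0; rewrite scale1r addr0 scale1r => e.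
have: B 0 x + B 0 x = B 0 x + 0 by rewrite addr0 -e.
by move/addrI.
Qed.
Lemma BZl x c a : S x -> B (c *: a) x = c *: B a x.
Proof. by move=> Sx; have := hB.1 x Sx c a 0; rewrite !addr0 B0l // addr0. Qed.
Lemma BDl x a1 a2 : S x -> B (a1 + a2) x = B a1 x + B a2 x.
Proof. by move=> Sx; have := hB.1 x Sx 1 a1 a2; rewrite !scale1r. Qed.
Lemma B0r a : S 0 -> B a 0 = 0.
Proof.
move=> S0; have := hB.2 a 1 0 0 S0 S0; rewrite mulr0 addr0 scale1r => e.
have: B a 0 + B a 0 = B a 0 + 0 by rewrite addr0 -e.
by move/addrI.
Qed.
Lemma BZr a c x : S 0 -> S x -> B a (c * x) = c *: B a x.
Proof. by move=> S0 Sx; have := hB.2 a c x 0 Sx S0; rewrite addr0 B0r // addr0. Qed.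
Lemma Bsum x k (f : 'I_k -> A) : S x -> B (\sum_(i < k) f i) x = \sum_(i < k) B (f i) x.
Proof.
move=> Sx; apply: (big_morph (fun a => B a x)); last exact: B0l.
by move=> a1 a2; apply: BDl.
Qed.
Lemma Breduce k (n : 'I_k -> A) (x : 'I_k -> R) (c : 'I_k -> R) xj :
  S 0 -> S xj -> (forall i, x i = c i * xj) ->
  \sum_(i < k) B (n i) (x i) = B (\sum_(i < k) c i *: n i) xj.
Proof.
move=> S0 Sxj Hx; rewrite Bsum //; apply: eq_bigr => i _.
by rewrite Hx BZr // BZl.
Qed.
End Bil.

Section Detect.
Variables (R : comNzRingType) (M : rset R).
Hypothesis hV : valuation_ring R.
Hypothesis hM : maximal_ideal M.

Definition dq (z y : R) : R :=
  match pselect (dv z y) with left H => projT1 (cid H) | right _ => 0 end.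
Lemma dqP z y : dv z y -> y = dq z y * z.
Proof. by rewrite /dq; case: pselect => // H _; exact: (projT2 (cid H)). Qed.

Variable N : lmodType R.
Definition Cz (z : R) (v : N) : Prop := exists a u, a * z = 0 /\ v = a *: u.
Definition Kset (g : R -> N) : Prop :=
  exists w, M w /\ forall z, M z -> dv z w -> Cz z (g z).

Lemma Cz0 z : Cz z 0.
Proof. by exists 0, 0; rewrite mul0r scale0r. Qed.
Lemma CzD z u v : Cz z u -> Cz z v -> Cz z (u + v).
Proof.
move=> [a1 [u1 [e1 ->]]] [a2 [u2 [e2 ->]]].
case: (dv_total hV a1 a2) => [[d ->]|[d ->]].
  by exists a1, (u1 + d *: u2); split => //; rewrite scalerDr scalerA mulrC.
by exists a2, (d *: u1 + u2); split => //; rewrite scalerDr scalerA mulrC.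
Qed.
Lemma CzZ z c v : Cz z v -> Cz z (c *: v).
Proof. by move=> [a [u [e ->]]]; exists a, (c *: u); split => //; rewrite !scalerA mulrC. Qed.

Lemma Kset0 : Kset 0.
Proof. by exists 0; split; [exact: M0 | move=> z _ _; exact: Cz0]. Qed.
Lemma KsetD u v : Kset u -> Kset v -> Kset (u + v).
Proof.
move=> [w1 [M1 H1]] [w2 [M2 H2]].
case: (dv_total hV w1 w2) => D.
  exists w1; split => // z Mz dz; apply: CzD; [exact: H1 | apply: H2 => //].
  exact: dv_trans dz D.
exists w2; split => // z Mz dz; apply: CzD; [apply: H1 => // | exact: H2].
exact: dv_trans dz D.
Qed.
Lemma KsetZ c v : Kset v -> Kset (c *: v).
Proof. by move=> [w [Mw H]]; exists w; split => // z Mz dz; apply: CzZ; apply: H. Qed.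

Definition KS : submod (R -> N) := Submod Kset0 KsetD KsetZ.

Definition Gfun (n : N) (y : R) : R -> N := fun z => dq z y *: n.
Definition Bt (n : N) (y : R) : quot KS := qpi KS (Gfun n y).

Lemma Bt_bil : bilinear_on M Bt.
Proof.
split.
  move=> x Mx c a1 a2; rewrite /Bt -qpiZ -qpiD; congr qpi.
  apply: funext => z; rewrite /Gfun; transitivity (c *: (dq z x *: a1) + dq z x *: a2); last by [].
  by rewrite scalerDr !scalerA mulrC.
move=> a c x1 x2 Mx1 Mx2; rewrite /Bt -qpiZ -qpiD; apply/qpi_eq.
have Hw : exists w, [/\ M w, dv w x1 & dv w x2].
  case: (dv_total hV x1 x2) => D.
    by exists x1; split => //; apply: dv_refl.
  by exists x2; split => //; apply: dv_refl.
have [w [Mw d1 d2]] := Hw.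
exists w; split => // z Mz dz.
have dz1 := dv_trans dz d1; have dz2 := dv_trans dz d2.
have dz3 : dv z (c * x1 + x2).
  by case: (pid_ideal z) => _ HD HM; apply: HD => //; apply: HM.
exists (dq z (c * x1 + x2) - (c * dq z x1 + dq z x2)), a; split.
  rewrite mulrBl -(dqP dz3) mulrDl -mulrA -(dqP dz1) -(dqP dz2).
  by rewrite subrr.
rewrite /Gfun /=.
transitivity (dq z (c * x1 + x2) *: a - (c *: (dq z x1 *: a) + dq z x2 *: a)); first by [].
by rewrite scalerBl scalerDl scalerA.
Qed.

Lemma detect (n0 : N) (x : R) : M x ->
  tensor_zero M (fun _ : 'I_1 => n0) (fun _ => x) ->
  exists z c a v, [/\ M z, x = c * z, a * z = 0 & c *: n0 = a *: v].
Proof.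
move=> Mx H; have := H _ Bt Bt_bil; rewrite big_ord1 => /qpi0 [w [Mw Hw]].
case: (dv_total hV x w) => D.
  have [a [u [e1 e2]]] := Hw x Mx D.
  by exists x, (dq x x), a, u; split => //; apply: dqP; apply: dv_refl.
have [a [u [e1 e2]]] := Hw w Mw (dv_refl w).
by exists w, (dq w x), a, u; split => //; apply: dqP.
Qed.

End Detect.



Section AnnSub.
Variables (R : comNzRingType) (r : R).
Definition annP (y : R^o) : Prop := r * y = 0.
Lemma annP0 : annP 0. Proof. by rewrite /annP mulr0. Qed.
Lemma annPD u v : annP u -> annP v -> annP (u + v).
Proof. by rewrite /annP mulrDr => -> ->; rewrite addr0. Qed.
Lemma annPZ (a : R) (v : R^o) : annP v -> annP (a *: v).
Proof. by rewrite /annP => e; rewrite [a *: v]/(a * v) mulrCA e mulr0. Qed.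
Definition annS : submod R^o := Submod annP0 annPD annPZ.
Definition fmap (q : quot annS) : R^o := r * qval q.
Lemma fmap_pi v : fmap (qpi annS v) = r * v.
Proof.
rewrite /fmap /=; have := canonP annS v; rewrite /= /annP mulrBr => /eqP.
by rewrite subr_eq0 => /eqP ->.
Qed.
Lemma fmap_lin : linear_for *:%R fmap.
Proof.
move=> a q1 q2; rewrite -(qpiK q1) -(qpiK q2) -qpiZ -qpiD !fmap_pi.
by rewrite mulrDr; congr (_ + _); exact: mulrCA.
Qed.
End AnnSub.

HB.instance Definition _ (R : comNzRingType) (r : R) :=
  GRing.isLinear.Build R (quot (annS r)) R^o *:%R (@fmap R r) (@fmap_lin R r).

Section Main.
Variables (R : comNzRingType) (M : rset R).
Hypothesis hV : valuation_ring R.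
Hypothesis hM : maximal_ideal M.

Lemma flat_of_nfg :
  (forall r : R, zero_divisor r -> r <> 0 -> ~ fin_gen (ann r)) -> flat_submodule M.
Proof.
move=> Hnfg N N' f injf k n x Mx Htz P B Bb.
case: k n x Mx Htz => [|k] n x Mx Htz; first by rewrite big_ord0.
have [j dj] := max_div hV x.
pose c i := dq (x j) (x i).
have Hx i : x i = c i * x j := dqP (dj i).
have M0' := M0 hM.
rewrite (Breduce Bb n M0' (Mx j) Hx).
set nn := \sum_(i < k.+1) c i *: n i.
have tz : tensor_zero M (fun _ : 'I_1 => f nn) (fun _ => x j).
  move=> P' B' Bb'; rewrite big_ord1.
  have := Htz P' B' Bb'; rewrite (Breduce Bb' (fun i => f (n i)) M0' (Mx j) Hx).
  have -> : f nn = \sum_(i < k.+1) c i *: f (n i).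
    by rewrite linear_sum; apply: eq_bigr => i _; rewrite linearZ.
  by [].
have [z [cc [a [v [Mz exj az e]]]]] := detect hV hM (Mx j) tz.
have f0 : forall u, f u = 0 -> u = 0.
  by move=> u fu; apply: injf; rewrite fu linear0.
rewrite exj (BZr Bb) // -(BZl Bb) //.
case: (pselect (a = 0)) => [a0|a0].
  rewrite (f0 (cc *: nn)) ?(B0l Bb) //.
  have -> : f (cc *: nn) = cc *: f nn by rewrite linearZ.
  by rewrite e a0 scale0r.
case: (pselect (z = 0)) => [z0|z0]; first by rewrite z0 (B0r Bb).
have zd : zero_divisor a by exists z.
have [z' [e' [az' Me' ez]]] := nfg_split hV hM (ann_ideal a) (Hnfg a zd a0) az.
rewrite ez mulrC (BZr Bb) // -(BZl Bb) //.
rewrite (f0 (z' *: (cc *: nn))) ?(B0l Bb) //.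
have -> : f (z' *: (cc *: nn)) = z' *: (cc *: f nn).
  by rewrite linearZ [in LHS]linearZ.
rewrite e scalerA [z' * a]mulrC.
by rewrite (az' : a * z' = 0) scale0r.
Qed.

Lemma nfg_of_flat :
  flat_submodule M -> forall r : R, zero_divisor r -> r <> 0 -> ~ fin_gen (ann r).
Proof.
move=> Hf r [s [s0 rs]] r0 fg.
have [t [rt Ht]] := fg_principal hV (ann_ideal r) fg rs s0.
have rt' : r * t = 0 := rt.
have t0 : t <> 0.
  by move=> t0; apply: s0; have [d ->] := Ht s rs; rewrite t0 mulr0.
have Mt : M t.
  apply: (nonunit_M hV hM) => [[u tu]]; apply: r0.
  by rewrite -[r]mulr1 -tu mulrA rt' mul0r.
pose F : {linear quot (annS r) -> R^o} := @fmap R r.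
have Fpi : forall v, F (qpi (annS r) v) = r * v.
  by move=> v; exact: fmap_pi.
have injF : injective F.
  move=> q1 q2; rewrite -(qpiK q1) -(qpiK q2) !Fpi => e.
  by apply/qpi_eq; rewrite /= /annP mulrBr e subrr.
have tz1 : tensor_zero M (fun _ : 'I_1 => F (qpi (annS r) 1)) (fun _ => t).
  move=> P B Bb; rewrite big_ord1 Fpi mulr1.
  have e1 : r *: (1 : R^o) = r by exact: mulr1.
  have e3 : B 1 (r * t) = r *: B 1 t by apply: (BZr Bb); [exact: (M0 hM) | exact: Mt].
  rewrite -e1 (BZl Bb) // -e3.
  by rewrite rt' (B0r Bb _ (M0 hM)).
have := Hf _ _ F injF 1 _ _ (fun _ => Mt) tz1.
move/(detect hV hM Mt) => [z [c [a [v [Mz etz az e]]]]].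
move: e; rewrite -(qpiK v) -!qpiZ => /qpi_eq; rewrite /= /annP => e.
have [b eb] := Ht _ e.
have eb' : c - a * qval v = b * t.
  by rewrite -eb; congr (_ - _); rewrite /GRing.scale /= mulr1.
have e2 : b * t * z = t.
  by rewrite -eb' mulrBl -etz -mulrA [qval v * z]mulrC mulrA az mul0r subr0.
apply: t0; apply: (cancel1M hV hM (MM hM (- b) Mz)).
by rewrite mulrDr mulr1 mulrA mulrN mulNr [t * b]mulrC e2 subrr.
Qed.

End Main.

Theorem proposition2p10 (R : comNzRingType) (M : rset R) :
  valuation_ring R -> maximal_ideal M ->
  (flat_submodule M <->
     (forall r : R, zero_divisor r -> r <> 0 -> ~ fin_gen (ann r)))
  /\
  (forall r s : R, r * s <> 0 ->
     rseteq (ann (r * s)) (colon (ann r) s)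
     /\ rseteq (ann r) (scale_set s (ann (r * s)))
     /\ (~ rseteq (ann r) (@zero_ideal R) ->
           (fin_gen (ann r) <-> fin_gen (ann (r * s))))).
Proof.
move=> hV hM; split; last by move=> r s; exact: (part2 hV).
split; [exact: (nfg_of_flat hV hM) | exact: (flat_of_nfg hV hM)].
Qed.
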